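(* Let $(\Omega,\mathcal{F})$ be a measurable space, $T:\Omega\to\Omega$ a measurable transformation and $V$ a $T$-invariant upper probability on $(\Omega,\mathcal{F})$. Then $V$ is ergodic if and only if there exists a probability $Q\in\mathcal{M}^e(T)\cap\operatorname{core}(V)$ such that for every $P\in\operatorname{core}(V)$, $P(A)=Q(A)$ for all $A\in\mathcal{I}$. Moreover, such a $Q$ is unique.
   Context: A capacity on $(\Omega,\mathcal{F})$ is a map $\mu:\mathcal{F}\to[0,1]$ with $\mu(\emptyset)=0$, $\mu(\Omega)=1$ and monotone. An upper probability is a capacity $V$ for which there is a weak*-compact set $\Lambda$ of probabilities (weak* = setwise convergence on $\mathcal{F}$) with $V(A)=\max_{P\in\Lambda}P(A)$ for all $A\in\mathcal{F}$. $V$ is $T$-invariant if $V(T^{-1}A)=V(A)$ for all $A$. $\mathcal{I}=\{A\in\mathcal{F}:T^{-1}A=A\}$. A $T$-invariant capacity $\mu$ is ergodic if for every $B\in\mathcal{I}$: $\mu(B)\in\{0,1\}$, and $\mu(B)=0$ or $\mu(\Omega\setminus B)=0$. $\operatorname{core}(\mu)$ is the set of finitely additive set functions $P:\mathcal{F}\to[0,1]$ with $P(\Omega)=1$ and $P(A)\le\mu(A)$ for all $A\in\mathcal{F}$ (for an upper probability these are all $\sigma$-additive). $\mathcal{M}^e(T)$ is the set of $T$-invariant probabilities $P$ on $(\Omega,\mathcal{F})$ that are ergodic, i.e. $P(A)\in\{0,1\}$ for all $A\in\mathcal{I}$. *)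

(* Defs.v *)
From HB Require Import structures.
From mathcomp Require Import all_boot all_order all_algebra.
From mathcomp Require Import all_classical all_reals all_analysis.
Set Implicit Arguments. Unset Strict Implicit. Unset Printing Implicit Defensive.
Import Order.TTheory GRing.Theory Num.Theory.
Import numFieldNormedType.Exports.
Local Open Scope classical_set_scope.
Local Open Scope ring_scope.

Section Defs.
Context (d : measure_display) (Omega : measurableType d) (R : realType).

Definition capacity (mu : set Omega -> R) : Prop :=
  [/\ mu set0 = 0, mu setT = 1,
      (forall A, measurable A -> 0 <= mu A <= 1) &
      (forall A B, measurable A -> measurable B -> A `<=` B -> mu A <= mu B)].

Definition fa_prob (P : set Omega -> R) : Prop :=
  [/\ P setT = 1,
      (forall A, measurable A -> 0 <= P A <= 1) &
      (forall A B, measurable A -> measurable B -> A `&` B = set0 ->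
         P (A `|` B) = P A + P B)].

Definition is_probability (P : set Omega -> R) : Prop :=
  fa_prob P /\
  (forall F : nat -> set Omega, (forall n, measurable (F n)) ->
     trivIset setT F ->
     (fun n : nat => \sum_(i < n) P (F i) : R) @ \oo --> (P (\bigcup_n F n) : R)).

(* weak* topology = setwise convergence on F: a set of set functions is
   weak*-compact iff its image under restriction to F is compact in the
   product (pointwise) topology on (set Omega -> R). *)
Definition weak_star_compact (L : set (set Omega -> R)) : Prop :=
  compact ((fun P : set Omega -> R => (P \_ measurable : {ptws set Omega -> R})) @` L).

Definition upper_probability (V : set Omega -> R) : Prop :=
  capacity V /\
  exists L : set (set Omega -> R),
    [/\ (forall P, L P -> is_probability P), weak_star_compact L &
        (forall A, measurable A ->
           (exists2 P, L P & P A = V A) /\ (forall P, L P -> P A <= V A))].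

Definition T_invariant (T : Omega -> Omega) (mu : set Omega -> R) : Prop :=
  forall A, measurable A -> mu (T @^-1` A) = mu A.

Definition invariant_set (T : Omega -> Omega) (A : set Omega) : Prop :=
  measurable A /\ T @^-1` A = A.

Definition ergodic_capacity (T : Omega -> Omega) (mu : set Omega -> R) : Prop :=
  T_invariant T mu /\
  forall B, invariant_set T B ->
    (mu B = 0 \/ mu B = 1) /\ (mu B = 0 \/ mu (~` B) = 0).

Definition core (mu : set Omega -> R) : set (set Omega -> R) :=
  [set P | fa_prob P /\ forall A, measurable A -> P A <= mu A].

Definition ergodic_prob (T : Omega -> Omega) : set (set Omega -> R) :=
  [set P | [/\ is_probability P, T_invariant T P &
            forall A, invariant_set T A -> P A = 0 \/ P A = 1]].

End Defs.

(* Main.v *)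
Require Import Defs.
From HB Require Import structures.
From mathcomp Require Import all_boot all_order all_algebra.
From mathcomp Require Import all_classical all_reals all_analysis.
From mathcomp Require Import lra zify.
Import Order.TTheory GRing.Theory Num.Theory.
Import numFieldNormedType.Exports.
Local Open Scope classical_set_scope.
Local Open Scope ring_scope.

Section Aux.
Context {d : measure_display} {Omega : measurableType d} {R : realType}.
Implicit Types (P : set Omega -> R) (A B : set Omega) (T : Omega -> Omega).

Lemma fa0 {P} : fa_prob P -> P set0 = 0.
Proof.
case=> _ _ add; have := add set0 set0 measurable0 measurable0 (setI0 _).
rewrite setU0 => h; lra.
Qed.

Lemma faD {P A B} : fa_prob P -> measurable A -> measurable B -> A `<=` B ->
  P B = P A + P (B `\` A).
Proof.
case=> _ _ add mA mB AB; rewrite -add.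
- by rewrite setDUK.
- by [].
- exact: measurableD.
- by rewrite setDE setICA setICr setI0.
Qed.

Lemma fa_ge0 {P A} : fa_prob P -> measurable A -> 0 <= P A.
Proof. by case=> _ b _ mA; have /andP[] := b _ mA. Qed.

Lemma fa_le1 {P A} : fa_prob P -> measurable A -> P A <= 1.
Proof. by case=> _ b _ mA; have /andP[] := b _ mA. Qed.

Lemma fa_le {P A B} : fa_prob P -> measurable A -> measurable B -> A `<=` B ->
  P A <= P B.
Proof.
move=> fP mA mB AB; rewrite (faD fP mA mB AB).
have := fa_ge0 fP (measurableD mB mA); lra.
Qed.

Lemma faC {P A} : fa_prob P -> measurable A -> P (~` A) = 1 - P A.
Proof.
move=> fP mA; have [PT _ add] := fP.
have := add _ _ mA (measurableC mA) (setICr A); rewrite setUCr PT; lra.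
Qed.

Lemma faUI {P A B} : fa_prob P -> measurable A -> measurable B ->
  P (A `|` B) + P (A `&` B) = P A + P B.
Proof.
move=> fP mA mB.
have e1 : A `|` B = A `|` (B `\` A) by apply/seteqP; split=> x /=; have [|] := pselect (A x); tauto.
rewrite e1 (faD fP (measurableI _ _ mB mA) mB (@subIsetl _ B A)).
have [_ _ add] := fP; rewrite add //; last 2 first.
- exact: measurableD.
- by rewrite setDE setICA setICr setI0.
rewrite (setIC A B); suff -> : B `\` (B `&` A) = B `\` A by lra.
by apply/seteqP; split=> x /=; have [|] := pselect (A x); tauto.
Qed.

Lemma fa_bigU {P} {F : nat -> set Omega} n : fa_prob P ->
  (forall i, measurable (F i)) -> trivIset setT F ->
  P (\big[setU/set0]_(i < n) F i) = \sum_(i < n) P (F i).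
Proof.
move=> fP mF tF; elim: n => [|n IH]; first by rewrite !big_ord0 fa0.
rewrite !big_ord_recr /= -IH; have [_ _ add] := fP; rewrite add //.
- exact: bigsetU_measurable.
- rewrite -bigcup_mkord; apply/seteqP; split => // x [[i /= ilt Fix] Fnx].
  have e : i = n by apply: (tF i n I I); exists x.
  by move: ilt; rewrite e ltnn.
Qed.


Lemma prob_up {P} {E : nat -> set Omega} : is_probability P ->
  (forall n, measurable (E n)) -> (forall n m, (n <= m)%N -> E n `<=` E m) ->
  P (E n) @[n --> \oo] --> P (\bigcup_n E n).
Proof.
move=> [fP sP] mE ndE.
have nd : nondecreasing_seq E by move=> n m nm; apply/subsetPset/ndE.
have mD : forall n, measurable (seqD E n).
  by case=> [|n] /=; [exact: mE| exact: measurableD].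
have := sP _ mD (trivIset_seqD nd); rewrite eq_bigcup_seqD => H.
have -> : (fun n => P (E n)) = (fun n => \sum_(i < n.+1) P (seqD E i)).
  apply/funext => n; rewrite -fa_bigU //; last exact: trivIset_seqD.
  by rewrite nondecreasing_bigsetU_seqD.
by rewrite (cvg_shiftS (fun n => \sum_(i < n) P (seqD E i))).
Qed.

Lemma prob_down {P} {E : nat -> set Omega} : is_probability P ->
  (forall n, measurable (E n)) -> (forall n m, (n <= m)%N -> E m `<=` E n) ->
  P (E n) @[n --> \oo] --> P (\bigcap_n E n).
Proof.
move=> pP mE dE.
have H := @prob_up P (fun n => ~` E n) pP (fun n => measurableC (mE n))
  (fun n m nm => subsetC (dE n m nm)).
have fP := pP.1.
have mI : measurable (\bigcap_n E n) by apply: bigcap_measurable => // ; exists 0%N.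
rewrite -setC_bigcap (faC fP mI) in H.
apply/cvgrPdist_lt => e e0.
move/cvgrPdist_lt : H => /(_ e e0); apply: filterS => n /=.
rewrite (faC fP (mE n)).
have -> : 1 - P (\bigcap_n E n) - (1 - P (E n)) = P (E n) - P (\bigcap_n E n) by lra.
by rewrite distrC.
Qed.

Lemma ptws_nbhs (f : {ptws set Omega -> R}) (X : set Omega) (B : set R) :
  nbhs (f X) B -> nbhs f [set g : {ptws set Omega -> R} | B (g X)].
Proof.
move=> hB; have := @proj_continuous (set Omega) (fun _ => R) X f.
by move/(_ _ hB).
Qed.


Definition restr (P : set Omega -> R) : {ptws set Omega -> R} := P \_ measurable.

Lemma restrE P A : measurable A -> restr P A = P A.
Proof. by move=> mA; rewrite /restr patchT // inE. Qed.

Lemma Vcont {V : set Omega -> R} : upper_probability V ->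
  forall G : nat -> set Omega, (forall n, measurable (G n)) ->
  (forall n m, (n <= m)%N -> G m `<=` G n) -> \bigcap_n G n = set0 ->
  forall e, 0 < e -> exists N, V (G N) < e.
Proof.
move=> [capV [L [Lprob Lcomp LV]]] G mG dG G0 e e0.
apply: contrapT => /forallNP H.
have eV : forall N, e <= V (G N).
  by move=> N; have := H N; rewrite ltNge => /negP/negPn.
pose S N := restr @` [set P | L P /\ e <= P (G N)].
have Sd : forall i j, (i <= j)%N -> S j `<=` S i.
  move=> i j ij _ [P [LP eP] <-]; exists P => //; split => //.
  apply: (le_trans eP); apply: fa_le (dG _ _ ij) => //.
  exact: (Lprob _ LP).1.
have FF : Filter (filter_from setT S).
  apply: filter_from_filter; first by exists 0%N.
  move=> i j _ _; exists (maxn i j) => // x Sx; split.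
    exact: (Sd _ _ (leq_maxl i j)).
  exact: (Sd _ _ (leq_maxr i j)).
have PF : ProperFilter (filter_from setT S).
  apply: filter_from_proper => i _.
  have [[P LP PV] _] := LV _ (mG i).
  by exists (restr P); exists P => //; split => //; rewrite PV.
have FK : filter_from setT S (restr @` L).
  by exists 0%N => // _ [P [LP _] <-]; exists P.
have [f [[P LP <-] clf]] := Lcomp _ PF FK.
have PGe : forall N, e <= P (G N).
  move=> N; rewrite leNgt; apply/negP => lt.
  have nb : nbhs (restr P) [set g : {ptws set Omega -> R} | g (G N) < e].
    by apply: (@ptws_nbhs (restr P) (G N) (fun y => y < e)); rewrite restrE //; exact: lt_nbhsl.
  have [g [[Q [LQ eQ] <-] /=]] := clf (S N) _ (ex_intro2 _ _ N I (@subset_refl _ _)) nb.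
  by rewrite restrE // ltNge eQ.
have := prob_down (Lprob _ LP) mG dG; rewrite G0 (fa0 (Lprob _ LP).1).
move/cvgrPdist_lt => /(_ e e0) [N _ /(_ N (leqnn N))] /=.
rewrite sub0r normrN => h.
have := PGe N; have := ler_norm (P (G N)); lra.
Qed.


Lemma core_prob {V P : set Omega -> R} : upper_probability V -> core V P ->
  is_probability P.
Proof.
move=> uV [fP PV]; split => // F mF tF.
have [_ _ _ Vmono] := uV.1.
pose U := \bigcup_n F n.
pose S n := \big[setU/set0]_(i < n) F i.
pose G n := U `\` S n.
have mU : measurable U := bigcup_measurable (fun k _ => mF k).
have mS n : measurable (S n) by apply: bigsetU_measurable => i _; exact: mF.
have mG n : measurable (G n) := measurableD mU (mS n).
have SE n x : S n x <-> exists2 i, (i < n)%N & F i x.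
  rewrite /S -bigcup_mkord; split => [[i /= ilt Fix]|[i ilt Fix]]; by exists i.
have dG : forall n m, (n <= m)%N -> G m `<=` G n.
  move=> n m nm x [Ux nS]; split => // Sx; apply: nS; move/SE: Sx => [i ilt Fix].
  by apply/SE; exists i => //; exact: leq_trans ilt nm.
have G0 : \bigcap_n G n = set0.
  apply/seteqP; split => // x Gx; have [Ux _] := Gx 0%N I; case: Ux => i _ Fix.
  by have [_ nS] := Gx i.+1 I; apply: nS; apply/SE; exists i.
apply/cvgrPdist_lt => e e0.
have [N hN] := Vcont uV G mG dG G0 e e0.
exists N => // n /= Nn.
rewrite -(fa_bigU n fP mF tF) -/(S n).
have SU : S n `<=` U by move=> x /SE [i _ Fix]; exists i.
rewrite (faD fP (mS n) mU SU) -/(G n).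
have h1 := fa_ge0 fP (mG n); have h2 := PV _ (mG n).
have h3 : V (G n) <= V (G N) by apply: Vmono => //; exact: dG.
have -> : P (S n) + P (G n) - P (S n) = P (G n) by lra.
rewrite ger0_norm //; lra.
Qed.


Definition preI (T : Omega -> Omega) (k : nat) (A : set Omega) := (iter k T) @^-1` A.

Lemma preS T k A : preI T k.+1 A = preI T k (T @^-1` A).
Proof. by []. Qed.

Lemma measurable_preT T A : measurable_fun setT T -> measurable A ->
  measurable (T @^-1` A).
Proof. by move=> mT mA; have := mT measurableT A mA; rewrite setTI. Qed.
Arguments measurable_preT {T A} _ _.

Lemma measurable_pre T : measurable_fun setT T ->
  forall k A, measurable A -> measurable (preI T k A).
Proof.
move=> mT; elim=> [|k IH] A mA; first by [].
by rewrite preS; apply: IH; exact: measurable_preT.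
Qed.
Arguments measurable_pre {T} _ k {A} _.

Lemma inv_pre T (mu : set Omega -> R) : measurable_fun setT T -> T_invariant T mu ->
  forall k A, measurable A -> mu (preI T k A) = mu A.
Proof.
move=> mT hT; elim=> [|k IH] A mA; first by [].
by rewrite preS IH ?hT //; exact: measurable_preT.
Qed.
Arguments inv_pre {T mu} _ _ k {A} _.

Lemma avg_le (a : nat -> R) c n : (forall k, a k <= c) ->
  (\sum_(k < n.+1) a k) / n.+1%:R <= c.
Proof.
move=> H; rewrite ler_pdivrMr ?ltr0Sn //.
apply: le_trans; first by apply: ler_sum => k _; exact: H.
by rewrite sumr_const card_ord mulr_natr.
Qed.

Lemma avg_ge (a : nat -> R) c n : (forall k, c <= a k) ->
  c <= (\sum_(k < n.+1) a k) / n.+1%:R.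
Proof.
move=> H; rewrite ler_pdivlMr ?ltr0Sn //.
apply: le_trans; last by apply: ler_sum => k _; exact: H.
by rewrite sumr_const card_ord mulr_natr.
Qed.

Definition ces (P0 : set Omega -> R) T n A :=
  (\sum_(k < n.+1) P0 (preI T k A)) / n.+1%:R.

Lemma ces_core (V P0 : set Omega -> R) T n : measurable_fun setT T ->
  T_invariant T V -> fa_prob P0 -> (forall A, measurable A -> P0 A <= V A) ->
  core V (ces P0 T n).
Proof.
move=> mT hT fP0 P0V; have [P0T P0b P0add] := fP0.
split; [split|].
- rewrite /ces; have -> : (\sum_(k < n.+1) P0 (preI T k setT)) = n.+1%:R.
    by rewrite (eq_bigr (fun _ => 1)) ?sumr_const ?card_ord // => k _; exact: P0T.
  by rewrite divff // pnatr_eq0.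
- move=> A mA; apply/andP; split.
    by apply: (@avg_ge (fun k => P0 (preI T k A))) => k; exact: fa_ge0 fP0 (measurable_pre mT k mA).
  by apply: (@avg_le (fun k => P0 (preI T k A))) => k; exact: fa_le1 fP0 (measurable_pre mT k mA).
- move=> A B mA mB AB0; rewrite /ces -mulrDl -big_split /=; congr (_ / _).
  apply: eq_bigr => k _.
  have -> : preI T k (A `|` B) = preI T k A `|` preI T k B by [].
  apply: P0add; try exact: measurable_pre.
  have -> : preI T k A `&` preI T k B = preI T k (A `&` B) by [].
  by rewrite AB0.
- move=> A mA; apply: (@avg_le (fun k => P0 (preI T k A))) => k.
  by rewrite -(inv_pre mT hT k mA); apply: P0V; exact: measurable_pre.
Qed.
Arguments ces_core {V P0 T} n _ _ _ _.

Lemma ces_inv (P0 : set Omega -> R) T n A : measurable_fun setT T ->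
  fa_prob P0 -> measurable A ->
  `|ces P0 T n (T @^-1` A) - ces P0 T n A| <= n.+1%:R^-1.
Proof.
move=> mT fP0 mA; rewrite /ces.
pose a k := P0 (preI T k A).
have e1 : \sum_(k < n.+1) P0 (preI T k (T @^-1` A)) = \sum_(k < n.+1) a k.+1 by [].
rewrite e1 -mulrBl.
have tel : forall m, \sum_(k < m) a k.+1 - \sum_(k < m) a k = a m - a 0%N.
  elim=> [|m IH]; first by rewrite !big_ord0 !subrr.
  by rewrite !big_ord_recr /=; move: IH; lra.
rewrite tel.
rewrite normrM [X in _ * X]ger0_norm ?invr_ge0 // -[leRHS]mul1r; apply: ler_wpM2r; first by rewrite invr_ge0.
have h1 := fa_ge0 fP0 (measurable_pre mT n.+1 mA).
have h2 := fa_le1 fP0 (measurable_pre mT n.+1 mA).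
have h3 := fa_ge0 fP0 (measurable_pre mT 0 mA).
have h4 := fa_le1 fP0 (measurable_pre mT 0 mA).
rewrite ler_norml; apply/andP; rewrite /a; split; lra.
Qed.
Arguments ces_inv {P0 T} n {A} _ _ _.


Lemma small_le (x y : R) (c : R) : 0 < c ->
  (forall e, 0 < e -> x < y + c * e) -> x <= y.
Proof.
move=> c0 H; apply/ler_addgt0Pr => e e0.
have := H (e / c) (divr_gt0 e0 c0); rewrite mulrC divfK ?gt_eqF //.
by move/ltW.
Qed.

Lemma small_eq (x y : R) (c : R) : 0 < c ->
  (forall e, 0 < e -> `|x - y| < c * e) -> x = y.
Proof.
move=> c0 H; apply/eqP; rewrite eq_le; apply/andP; split.
  apply: (@small_le x y c c0) => e e0; have := H e e0; rewrite ltr_norml => /andP[].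
  lra.
apply: (@small_le y x c c0) => e e0; have := H e e0; rewrite ltr_norml => /andP[].
lra.
Qed.

Lemma exists_inv_core (V : set Omega -> R) T : measurable_fun setT T ->
  upper_probability V -> T_invariant T V ->
  exists Q, core V Q /\ T_invariant T Q.
Proof.
move=> mT uV hT; have [capV [L [Lprob Lcomp LV]]] := uV.
have [[P0 LP0 _] _] := LV setT measurableT.
have fP0 := (Lprob _ LP0).1.
have P0V : forall A, measurable A -> P0 A <= V A.
  by move=> A mA; exact: (LV A mA).2 P0 LP0.
pose Pr n := restr (ces P0 T n).
have cK := @tychonoff (set Omega) (fun _ => R) (fun _ => `[0%R, 1%R]%classic)
  (fun _ => @segment_compact R 0 1).
have FK : (Pr @ \oo) [set f : {ptws set Omega -> R} | forall X, `[0%R, 1%R]%classic (f X)].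
  exists 0%N => // n _ X /=; rewrite /Pr /restr /patch.
  case: ifPn => [/set_mem mX|_]; last by rewrite in_itv /= lexx ler01.
  have [[_ b _] _] := ces_core n mT hT fP0 P0V.
  by rewrite in_itv /=; exact: b.
have [Q [KQ clQ]] := cK _ _ FK.
have approx : forall (Prd : nat -> Prop) e, 0 < e -> (\forall n \near \oo, Prd n) ->
    forall X1 X2 X3, exists n, [/\ Prd n, `|Q X1 - Pr n X1| < e,
      `|Q X2 - Pr n X2| < e & `|Q X3 - Pr n X3| < e].
  move=> Prd e e0 hPrd X1 X2 X3.
  have nb i : nbhs Q [set g : {ptws set Omega -> R} | ball (Q i) e (g i)].
    exact: (@ptws_nbhs Q i (ball (Q i) e) (nbhsx_ballx (Q i) e e0)).
  have nb3 : nbhs Q ([set g : {ptws set Omega -> R} | ball (Q X1) e (g X1)] `&`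
      ([set g : {ptws set Omega -> R} | ball (Q X2) e (g X2)] `&`
       [set g : {ptws set Omega -> R} | ball (Q X3) e (g X3)])).
    by apply: filterI => //; apply: filterI.
  have FA : (Pr @ \oo) [set g | exists n, Prd n /\ g = Pr n].
    by apply: filterS hPrd => n Pn; exists n.
  have [g [[n [Pn ->]] [h1 [h2 h3]]]] := clQ _ _ FA nb3.
  by exists n; split.
have PrE n X : measurable X -> Pr n X = ces P0 T n X by move=> mX; exact: restrE.
have allT : \forall n \near \oo, (fun _ : nat => True) n by apply: nearW.
exists Q; split; [split; [split|]|].
- apply: (@small_eq (Q setT) 1 1 ltr01) => e e0.
  have [n [_ h _ _]] := approx (fun _ => True) e e0 allT setT setT setT.
  have [[c1 _ _] _] := ces_core n mT hT fP0 P0V.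
  by rewrite PrE // c1 in h; rewrite mul1r.
- by move=> A _; have := KQ A; rewrite /= in_itv.
- move=> A B mA mB AB0.
  apply: (@small_eq (Q (A `|` B)) (Q A + Q B) 3%:R (ltr0Sn _ 2)) => e e0.
  have [n [_ h1 h2 h3]] := approx (fun _ => True) e e0 allT
    (A `|` B) A B.
  have [[_ _ cadd] _] := ces_core n mT hT fP0 P0V.
  rewrite !PrE ?cadd // in h1 h2 h3; last exact: measurableU.
  move: h1 h2 h3; set a := ces P0 T n A; set b := ces P0 T n B.
  rewrite !ltr_norml => /andP[h1 h1'] /andP[h2 h2'] /andP[h3 h3'].
  apply/andP; split; lra.
- move=> A mA; apply: (@small_le (Q A) (V A) 1 ltr01) => e e0.
  have [n [_ h _ _]] := approx (fun _ => True) e e0 allT A A A.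
  have [_ cV] := ces_core n mT hT fP0 P0V.
  have := cV A mA; rewrite PrE // in h; move: h; rewrite ltr_norml => /andP[h h'].
  lra.
- move=> A mA.
  apply: (@small_eq (Q (T @^-1` A)) (Q A) 3%:R (ltr0Sn _ 2)) => e e0.
  have mTA := measurable_preT mT mA.
  have [n [ne h1 h2 _]] := approx (fun n => n.+1%:R^-1 < e) e e0
    (near_infty_natSinv_lt (PosNum e0)) (T @^-1` A) A A.
  have := ces_inv n mT fP0 mA; rewrite !PrE // in h1 h2.
  move: h1 h2; set a := ces P0 T n A; set b := ces P0 T n (T @^-1` A).
  rewrite !ltr_norml ler_norml => /andP[h1 h1'] /andP[h2 h2'] /andP[h3 h3'].
  set w := n.+1%:R^-1 in ne h3 h3'; apply/andP; split; lra.
Qed.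


Lemma lim_ge_near {u : nat -> R} {l c : R} : u @ \oo --> l ->
  (\forall n \near \oo, c <= u n) -> c <= l.
Proof. by move=> ul hu; exact: (closed_cvg _ (@closed_ge R c) hu l ul). Qed.

Lemma inv_le {T} {Q1 Q2 : set Omega -> R} : measurable_fun setT T ->
  is_probability Q1 -> is_probability Q2 -> T_invariant T Q1 -> T_invariant T Q2 ->
  (forall B, invariant_set T B -> Q1 B = Q2 B) ->
  forall A, measurable A -> Q1 A <= Q2 A.
Proof.
move=> mT p1 p2 h1 h2 hI.
have f1 := p1.1; have f2 := p2.1.
pose nu A := Q1 A - Q2 A.
pose E := [set nu A | A in measurable].
have hsE : has_sup E.
  split; first by exists (nu setT); exists setT.
  exists 1 => _ [A mA <-]; rewrite /nu.
  have := fa_le1 f1 mA; have := fa_ge0 f2 mA; lra.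
pose s := sup E.
have nus : forall A, measurable A -> nu A <= s.
  by move=> A mA; apply: (sup_upper_bound hsE); exists A.
have nuUI : forall A B, measurable A -> measurable B ->
    nu (A `|` B) + nu (A `&` B) = nu A + nu B.
  move=> A B mA mB; rewrite /nu; have := faUI f1 mA mB; have := faUI f2 mA mB; lra.
have nu_up : forall F : nat -> set Omega, (forall n, measurable (F n)) ->
    (forall n m, (n <= m)%N -> F n `<=` F m) ->
    (fun n => nu (F n)) @ \oo --> nu (\bigcup_n F n).
  by move=> F mF ndF; exact: (cvgB (prob_up p1 mF ndF) (prob_up p2 mF ndF)).
have nu_down : forall F : nat -> set Omega, (forall n, measurable (F n)) ->
    (forall n m, (n <= m)%N -> F m `<=` F n) ->
    (fun n => nu (F n)) @ \oo --> nu (\bigcap_n F n).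
  by move=> F mF ndF; exact: (cvgB (prob_down p1 mF ndF) (prob_down p2 mF ndF)).
(* Hahn-type maximal set *)
pose w (k : nat) : R := 1 / 2 ^+ k.
have w0 k : 0 < w k by rewrite /w divr_gt0 // exprn_gt0.
have wS k : w k = 2 * w k.+1.
  by rewrite /w exprS !div1r invfM mulrA divff ?mul1r // pnatr_eq0.
have [A hA] : {A : nat -> set Omega & forall k, measurable (A k) /\ s - w k < nu (A k)}.
  apply: (@choice nat (set Omega) (fun k X => measurable X /\ s - w k < nu X)) => k; have [_ [X mX <-] h] := sup_adherent (w0 k) hsE.
  by exists X.
pose C := fix C (m n : nat) : set Omega :=
  if n is n'.+1 then C m n' `&` A (m + n)%N else A m.
have mC m n : measurable (C m n).
  elim: n => [|n IH] /=; first exact: (hA m).1.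
  exact: measurableI IH (hA _).1.
have CE m n x : C m n x <-> forall k, (m <= k <= m + n)%N -> A k x.
  elim: n => [|n IH] /=.
    split=> [Ax k|H]; last by apply: H; rewrite addn0 leqnn.
    by rewrite addn0 -eqn_leq => /eqP <-.
  split=> [[/IH H Ax] k /andP[mk kn]|H].
    have [kn'|kn'] := leqP k (m + n); first by apply: H; rewrite mk.
    by have -> : k = (m + n.+1)%N by lia.
  split; last by apply: H; lia.
  by apply/IH => k /andP[mk kn]; apply: H; lia.
have nuC m n : s - 2 * w m + w (m + n)%N <= nu (C m n).
  elim: n => [|n IH] /=; first by rewrite addn0; have := (hA m).2; lra.
  have := nuUI _ _ (mC m n) (hA (m + n.+1)%N).1.
  have := nus _ (measurableU _ _ (mC m n) (hA (m + n.+1)%N).1).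
  have := (hA (m + n.+1)%N).2; have := wS (m + n)%N; rewrite addnS; lra.
pose D m := \bigcap_n C m n.
have mD m : measurable (D m) by apply: bigcap_measurable => //; exists 0%N.
have DE m x : D m x <-> forall k, (m <= k)%N -> A k x.
  split=> [Dx k mk|H n _]; last by apply/CE => k /andP[mk _]; exact: H.
  by have /CE := Dx (k - m)%N I; apply; lia.
have nuD m : s - 2 * w m <= nu (D m).
  have dC : forall n n', (n <= n')%N -> C m n' `<=` C m n.
    by move=> n n' nn' x /CE H; apply/CE => k /andP[mk kn]; apply: H; lia.
  apply: (lim_ge_near (nu_down _ (mC m) dC)).
  by apply: nearW => n; have := nuC m n; have := w0 (m + n)%N; lra.
pose P := \bigcup_m D m.
have mP : measurable P by apply: bigcup_measurable => k _; exact: mD.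
have nuP : nu P = s.
  apply/eqP; rewrite eq_le nus //=; apply/ler_addgt0Pr => e e0.
  have e20 : 0 < e / 2 by rewrite divr_gt0.
  have iD : forall n n', (n <= n')%N -> D n `<=` D n'.
    by move=> n n' nn' x /DE H; apply/DE => k mk; apply: H; lia.
  suff : s - e <= nu P by lra.
  apply: (lim_ge_near (nu_up _ mD iD)).
  apply: filterS (near_infty_natSinv_expn_lt (PosNum e20)) => m /= hm.
  have := nuD m; rewrite /w in hm *; lra.
pose M X := measurable X /\ nu X = s.
have MU X Y : M X -> M Y -> M (X `|` Y).
  move=> [mX nX] [mY nY]; split; first exact: measurableU.
  have := nuUI _ _ mX mY; have := nus _ (measurableU _ _ mX mY).
  have := nus _ (measurableI _ _ mX mY); lra.
have Mpre k X : M X -> M (preI T k X).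
  move=> [mX nX]; split; first exact: measurable_pre.
  by rewrite /nu (inv_pre mT h1 k mX) (inv_pre mT h2 k mX).
pose W m k := [set x | exists2 j, (j <= k)%N & P (iter (m + j) T x)].
have MW m k : M (W m k).
  elim: k => [|k IH].
    have -> : W m 0%N = preI T m P.
      apply/seteqP; split => x /=; first by case=> j; rewrite leqn0 => /eqP ->; rewrite addn0.
      by move=> Px; exists 0%N => //; rewrite addn0.
    by apply: Mpre; split.
  have -> : W m k.+1 = W m k `|` preI T (m + k.+1) P.
    apply/seteqP; split => x /=.
      case=> j; rewrite leq_eqVlt => /orP[/eqP ->|jk Px]; first by right.
      by left; exists j.
    by case=> [[j jk Px]|Px]; [exists j => //; exact: leqW | exists k.+1].
  by apply: MU => //; apply: Mpre; split.
pose U m := \bigcup_k W m k.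
have mU m : measurable (U m) by apply: bigcup_measurable => k _; exact: (MW m k).1.
have UE m x : U m x <-> exists2 n, (m <= n)%N & P (iter n T x).
  split=> [[k _ [j jk Px]]|[n mn Px]]; first by exists (m + j)%N => //; lia.
  by exists (n - m)%N => //; exists (n - m)%N => //; rewrite subnKC.
have nuU m : s <= nu (U m).
  have iW : forall k k', (k <= k')%N -> W m k `<=` W m k'.
    by move=> k k' kk' x [j jk Px]; exists j => //; exact: leq_trans jk kk'.
  apply: (lim_ge_near (nu_up _ (fun k => (MW m k).1) iW)).
  by apply: nearW => k; rewrite (MW m k).2.
pose B := \bigcap_m U m.
have mB : measurable B by apply: bigcap_measurable => //; exists 0%N.
have nuB : s <= nu B.
  have dU : forall m m', (m <= m')%N -> U m' `<=` U m.
    move=> m m' mm' x /UE [n mn Px]; apply/UE; exists n => //; exact: leq_trans mm' mn.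
  apply: (lim_ge_near (nu_down _ mU dU)).
  by apply: nearW => m; exact: nuU.
have iB : invariant_set T B.
  split => //; apply/seteqP; split => x /= Bx m _.
    have /UE [n mn Px] := Bx m I; apply/UE.
    by exists n.+1; [lia | rewrite iterSr].
  have /UE [n mn Px] := Bx m.+1 I; apply/UE.
  case: n mn Px => [//|n] mn Px; exists n; first by lia.
  by rewrite -iterSr.
have nuB0 : nu B = 0 by rewrite /nu (hI _ iB) subrr.
move=> X mX; have := nus _ mX; rewrite /nu; lra.
Qed.


Lemma core_val {V P : set Omega -> R} {B} : core V P -> measurable B ->
  (V B = 0 -> P B = 0) /\ (V (~` B) = 0 -> P B = 1).
Proof.
move=> [fP PV] mB; split => h.
  by have := PV B mB; have := fa_ge0 fP mB; lra.
have := PV _ (measurableC mB); have := fa_ge0 fP (measurableC mB).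
rewrite (faC fP mB); lra.
Qed.

Lemma V_agree {V Q : set Omega -> R} {B} : upper_probability V ->
  (forall P, core V P -> P B = Q B) -> measurable B -> V B = Q B.
Proof.
move=> [_ [L [Lprob _ LV]]] agree mB.
have [[P LP PB] _] := LV B mB; rewrite -PB; apply: agree; split.
  exact: (Lprob _ LP).1.
by move=> A mA; exact: (LV A mA).2 P LP.
Qed.

End Aux.

Theorem theorem3p2 (d : measure_display) (Omega : measurableType d)
  (R : realType) (T : Omega -> Omega) (V : set Omega -> R) :
  measurable_fun setT T ->
  upper_probability V -> T_invariant T V ->
  (ergodic_capacity T V <->
     exists Q, [/\ ergodic_prob T Q, core V Q &
       forall P, core V P -> forall A, invariant_set T A -> P A = Q A])
  /\
  (forall Q1 Q2 : set Omega -> R,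
     [/\ ergodic_prob T Q1, core V Q1 &
       forall P, core V P -> forall A, invariant_set T A -> P A = Q1 A] ->
     [/\ ergodic_prob T Q2, core V Q2 &
       forall P, core V P -> forall A, invariant_set T A -> P A = Q2 A] ->
     forall A, measurable A -> Q1 A = Q2 A).
Proof.
move=> mT uV hV; split; first split.
- move=> erg; have [Q [cQ iQ]] := exists_inv_core V T mT uV hV.
  have [_ hE] := erg.
  have agree : forall P, core V P -> forall A, invariant_set T A -> P A = Q A.
    move=> P cP A iA; have [mA _] := iA.
    have [hP0 hP1] := core_val cP mA; have [hQ0 hQ1] := core_val cQ mA.
    have [_ [h|h]] := hE A iA; first by rewrite hP0 // hQ0.
    by rewrite hP1 // hQ1.
  exists Q; split => //; split => //; first exact: core_prob uV cQ.
  move=> A iA; have [mA _] := iA.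
  have [hQ0 hQ1] := core_val cQ mA.
  by have [_ [h|h]] := hE A iA; [left; exact: hQ0 | right; exact: hQ1].
- move=> [Q [[pQ iQ eQ] cQ agree]]; split => // B iB; have [mB TB] := iB.
  have VB : V B = Q B by apply: V_agree => // P cP; exact: agree.
  have iC : invariant_set T (~` B).
    by split; [exact: measurableC | rewrite -[in RHS]TB].
  have VC : V (~` B) = Q (~` B) by apply: V_agree => //; [move=> P cP; exact: agree | exact: measurableC].
  rewrite (faC pQ.1 mB) in VC.
  by case: (eQ B iB) => h; rewrite VB VC h; [split; left | split; right; rewrite // subrr].
- move=> Q1 Q2 [[p1 i1 _] c1 a1] [[p2 i2 _] c2 a2] A mA.
  apply/eqP; rewrite eq_le (inv_le mT p1 p2 i1 i2 _ A mA) ?(inv_le mT p2 p1 i2 i1 _ A mA) //.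
    by move=> B iB; rewrite (a2 _ c1 B iB).
  by move=> B iB; rewrite (a1 _ c2 B iB).
Qed.
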